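(* Let $R \subseteq S$ be an extension of commutative rings, where $R$ is a local ring (not necessarily Noetherian) with maximal ideal $\mathfrak m$. Then the strict closure $R^*$ of $R$ in $S$ satisfies $R^* \subseteq R + \mathfrak m S$. In particular, if $\mathfrak m S \subseteq R$, then $R$ is strictly closed in $S$.
   Context: For an extension of commutative rings $R \subseteq S$, the strict closure of $R$ in $S$ is $R^* = \{\alpha \in S \mid \alpha\otimes 1 = 1\otimes \alpha \text{ in } S\otimes_R S\}$; one says $R$ is strictly closed in $S$ if $R = R^*$. *)

(* Defs.v *)
From HB Require Import structures.
From mathcomp Require Import all_boot all_order all_algebra.
Set Implicit Arguments. Unset Strict Implicit. Unset Printing Implicit Defensive.
Import GRing.Theory.
Local Open Scope ring_scope.

Definition is_ideal (R : comPzRingType) (I : R -> Prop) : Prop :=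
  [/\ I 0, (forall x y, I x -> I y -> I (x + y)) & (forall r x, I x -> I (r * x))].

Definition is_maximal_ideal (R : comPzRingType) (m : R -> Prop) : Prop :=
  [/\ is_ideal m, ~ m 1 &
      forall J : R -> Prop, is_ideal J -> ~ J 1 -> (forall x, m x -> J x) ->
        forall x, J x -> m x].

Definition local_ring_with (R : comPzRingType) (m : R -> Prop) : Prop :=
  is_maximal_ideal m /\
  forall J : R -> Prop, is_maximal_ideal J -> forall x, J x <-> m x.

(* ---- The tensor product S (x)_R S, for an R-algebra S given by f : R -> S.
   It is the free abelian group on S * S (formal Z-combinations, represented
   as functions S * S -> int) modulo the subgroup generated by the
   bilinearity and R-balancedness relations.  [tensor_rel f u] says the
   formal combination u lies in that subgroup, i.e. u = 0 in S (x)_R S. *)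
Definition fsing (S : comPzRingType) (p : S * S) : S * S -> int :=
  fun q => if q == p then 1 else 0.

Inductive tensor_rel (R S : comPzRingType) (f : R -> S) : (S * S -> int) -> Prop :=
| tr_addl x x' y : tensor_rel f
    (fun q => fsing (x + x', y) q - fsing (x, y) q - fsing (x', y) q)
| tr_addr x y y' : tensor_rel f
    (fun q => fsing (x, y + y') q - fsing (x, y) q - fsing (x, y') q)
| tr_bal r x y : tensor_rel f
    (fun q => fsing (f r * x, y) q - fsing (x, f r * y) q)
| tr_zero : tensor_rel f (fun _ => 0)
| tr_add g h : tensor_rel f g -> tensor_rel f h -> tensor_rel f (fun q => g q + h q)
| tr_opp g : tensor_rel f g -> tensor_rel f (fun q => - g q)
| tr_ext g h : (forall q, g q = h q) -> tensor_rel f g -> tensor_rel f h.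

Definition in_strict_closure (R S : comPzRingType) (f : R -> S) (a : S) : Prop :=
  tensor_rel f (fun q => fsing (a, 1) q - fsing (1, a) q).

Definition strictly_closed (R S : comPzRingType) (f : R -> S) : Prop :=
  forall a : S, in_strict_closure f a <-> exists r, a = f r.

Definition in_ext_ideal (R S : comPzRingType) (f : R -> S) (m : R -> Prop) (s : S) : Prop :=
  exists l : seq (R * S), (forall p, p \in l -> m p.1) /\
    s = \sum_(p <- l) f p.1 * p.2.

(* Main.v *)
Require Import Defs.
From mathcomp Require Import all_boot all_order all_algebra.
From mathcomp Require Import boolp classical_sets ring.
Set Implicit Arguments. Unset Strict Implicit. Unset Printing Implicit Defensive.
Import GRing.Theory.
Local Open Scope ring_scope.

Section Aux.
Variables (R S : comPzRingType) (f : {rmorphism R -> S}).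
Hypothesis f_inj : injective f.
Variable m : R -> Prop.
Hypothesis Hmax : is_maximal_ideal m.

Let M := in_ext_ideal f m.

Lemma m0 : m 0. Proof. by case: Hmax => [[H ? ?]] _ _. Qed.
Lemma mD x y : m x -> m y -> m (x + y). Proof. by case: Hmax => [[? H ?]] _ _; apply: H. Qed.
Lemma mM r x : m x -> m (r * x). Proof. by case: Hmax => [[? ? H]] _ _; apply: H. Qed.
Lemma mN x : m x -> m (- x).
Proof. by move=> h; have := mM (-1) h; rewrite mulN1r. Qed.
Lemma mB x y : m x -> m y -> m (x - y).
Proof. by move=> hx hy; apply: mD => //; apply: mN. Qed.

Lemma m_inv s : ~ m s -> exists t, m (t * s - 1).
Proof.
move=> ns.
pose J x := exists t y, m y /\ x = t * s + y.
have IJ : is_ideal J.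
  split.
  - by exists 0, 0; split; [apply: m0| rewrite mul0r addr0].
  - move=> x y [t1 [y1 [h1 ->]]] [t2 [y2 [h2 ->]]].
    by exists (t1 + t2), (y1 + y2); split; [apply: mD| ring].
  - move=> r x [t1 [y1 [h1 ->]]].
    by exists (r * t1), (r * y1); split; [apply: mM| ring].
case: (pselect (J 1)) => [[t [y [hy e]]]|nJ].
  exists t; have -> : t * s - 1 = - y by rewrite e; ring.
  exact: mN.
exfalso; apply: ns; case: Hmax => _ _ H; apply: (H J IJ nJ).
- by move=> x hx; exists 0, x; split => //; rewrite mul0r add0r.
- by exists 1, 0; split; [apply: m0| rewrite mul1r addr0].
Qed.

Lemma M0 : M 0. Proof. by exists [::]; split => //; rewrite big_nil. Qed.
Lemma MD x y : M x -> M y -> M (x + y).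
Proof.
move=> [l1 [h1 ->]] [l2 [h2 ->]]; exists (l1 ++ l2); split; last by rewrite big_cat.
by move=> p; rewrite mem_cat => /orP[/h1|/h2].
Qed.
Lemma MM s x : M x -> M (s * x).
Proof.
move=> [l [h ->]]; exists [seq (p.1, s * p.2) | p <- l]; split.
  by move=> p /mapP [q qin ->]; exact: (h q qin).
rewrite big_map mulr_sumr; apply: eq_bigr => p _ /=; ring.
Qed.
Lemma MN x : M x -> M (- x). Proof. by move=> h; have := MM (-1) h; rewrite mulN1r. Qed.
Lemma MB x y : M x -> M y -> M (x - y).
Proof. by move=> hx hy; apply: MD => //; apply: MN. Qed.
Lemma Mf z x : m z -> M (f z * x).
Proof. by move=> hz; exists [:: (z, x)]; split; [move=> p; rewrite inE => /eqP -> | rewrite big_seq1]. Qed.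

Definition cov (V : zmodType) (G : S * S -> V) (l : seq (S * S)) :=
  forall q, G q != 0 -> q \in l.

Lemma sum_inv (V : zmodType) (G : S * S -> V) l l' :
  uniq l -> uniq l' -> cov G l -> cov G l' ->
  \sum_(q <- l) G q = \sum_(q <- l') G q.
Proof.
move=> ul ul' cl cl'.
have E (a b : seq (S * S)) : cov G b ->
    \sum_(q <- a) G q = \sum_(q <- a | q \in b) G q.
  move=> cb; rewrite [RHS]big_mkcond; apply: eq_bigr => q _.
  case: ifP => // /negbT H; have [//|/cb] := eqVneq (G q) 0; by rewrite (negbTE H).
rewrite (E l l' cl') (E l' l cl) -[LHS]big_filter -[RHS]big_filter; apply: perm_big.
apply: uniq_perm; rewrite ?filter_uniq // => q; rewrite !mem_filter andbC //.
Qed.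

Variable psi : S * S -> S.

Definition sm (u : S * S -> int) l := \sum_(q <- l) psi q *~ u q.

Definition covi (u : S * S -> int) (l : seq (S * S)) := forall q, u q != 0 -> q \in l.

Lemma covi_cov u l : covi u l -> cov (fun q => psi q *~ u q) l.
Proof. move=> h q; case: (eqVneq (u q) 0) => [->|/h //]; by rewrite mulr0z eqxx. Qed.

Lemma sm_inv u l l' : uniq l -> uniq l' -> covi u l -> covi u l' -> sm u l = sm u l'.
Proof. by move=> *; apply: sum_inv => //; apply: covi_cov. Qed.

Lemma sm_fsing p l : uniq l -> p \in l -> sm (fsing p) l = psi p.
Proof.
move=> ul pl; rewrite /sm (bigD1_seq p) //= /fsing eqxx mulr1z big1 ?addr0 //.
by move=> q /negbTE ->.
Qed.

Lemma sm_sub u v l : sm (fun q => u q - v q) l = sm u l - sm v l.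
Proof. by rewrite /sm -sumrB; apply: eq_bigr => q _; rewrite mulrzBr. Qed.

Lemma sm_add u v l : sm (fun q => u q + v q) l = sm u l + sm v l.
Proof. by rewrite /sm -big_split; apply: eq_bigr => q _; rewrite mulrzDr. Qed.

Lemma sm_opp u l : sm (fun q => - u q) l = - sm u l.
Proof. by rewrite /sm -sumrN; apply: eq_bigr => q _; rewrite mulrNz. Qed.

Lemma sm3 p1 p2 p3 l : uniq l ->
  covi (fun q => fsing p1 q - fsing p2 q - fsing p3 q) l ->
  sm (fun q => fsing p1 q - fsing p2 q - fsing p3 q) l = psi p1 - psi p2 - psi p3.
Proof.
move=> ul cl; set l' := undup (l ++ [:: p1; p2; p3]).
have ul' : uniq l' by apply: undup_uniq.
have inl' p : p \in [:: p1; p2; p3] -> p \in l'.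
  by move=> h; rewrite mem_undup mem_cat h orbT.
rewrite (sm_inv ul ul' cl); last first.
  by move=> q /cl ql; rewrite mem_undup mem_cat ql.
rewrite !sm_sub !sm_fsing // inl' // !inE eqxx ?orbT //.
Qed.

Lemma sm2 p1 p2 l : uniq l ->
  covi (fun q => fsing p1 q - fsing p2 q) l ->
  sm (fun q => fsing p1 q - fsing p2 q) l = psi p1 - psi p2.
Proof.
move=> ul cl; set l' := undup (l ++ [:: p1; p2]).
have ul' : uniq l' by apply: undup_uniq.
have inl' p : p \in [:: p1; p2] -> p \in l'.
  by move=> h; rewrite mem_undup mem_cat h orbT.
rewrite (sm_inv ul ul' cl); last first.
  by move=> q /cl ql; rewrite mem_undup mem_cat ql.
rewrite !sm_sub !sm_fsing // inl' // !inE eqxx ?orbT //.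
Qed.

Lemma covi3 (p1 p2 p3 : S * S) :
  covi (fun q => fsing p1 q - fsing p2 q - fsing p3 q) [:: p1; p2; p3].
Proof.
move=> q; apply: contraR; rewrite !inE ?negbK => /norP[a /norP[b c]].
by rewrite /fsing (negbTE a) (negbTE b) (negbTE c) !subr0.
Qed.

Lemma covi2 (p1 p2 : S * S) :
  covi (fun q => fsing p1 q - fsing p2 q) [:: p1; p2].
Proof.
move=> q; apply: contraR; rewrite !inE ?negbK => /norP[a b].
by rewrite /fsing (negbTE a) (negbTE b) !subr0.
Qed.

Definition Good u := forall l, uniq l -> covi u l -> M (sm u l).
Definition Fin u := exists l, covi u l.

Hypothesis D1 : forall x x' y, M (psi (x + x', y) - psi (x, y) - psi (x', y)).
Hypothesis D2 : forall x y y', M (psi (x, y + y') - psi (x, y) - psi (x, y')).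
Hypothesis D3 : forall r x y, M (psi (f r * x, y) - psi (x, f r * y)).


Lemma tensor_good u : tensor_rel f u -> Fin u /\ Good u.
Proof.
elim.
- move=> x x' y; split.
    by eexists; apply: covi3.
  by move=> l ul cl; rewrite (sm3 ul cl).
- move=> x y y'; split.
    by eexists; apply: covi3.
  by move=> l ul cl; rewrite (sm3 ul cl).
- move=> r x y; split.
    by eexists; apply: covi2.
  by move=> l ul cl; rewrite (sm2 ul cl).
- split; first by exists [::].
  move=> l _ _; rewrite /sm big1; [exact: M0 | by move=> q _; rewrite mulr0z].
- move=> g h _ [[lg cg] Gg] _ [[lh ch] Gh]; split.
    exists (lg ++ lh) => q; rewrite mem_cat.
    case: (eqVneq (g q) 0) => [->|/cg -> //]; rewrite add0r => /ch ->; by rewrite orbT.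
  move=> l ul cl; set l' := undup (l ++ lg ++ lh).
  have ul' : uniq l' by apply: undup_uniq.
  rewrite (sm_inv ul ul' cl); last first.
    by move=> q /cl ql; rewrite mem_undup mem_cat ql.
  rewrite sm_add; apply: MD.
    by apply: Gg => // q /cg ql; rewrite mem_undup !mem_cat ql orbT.
  by apply: Gh => // q /ch ql; rewrite mem_undup !mem_cat ql !orbT.
- move=> g _ [[lg cg] Gg]; split.
    by exists lg => q; rewrite oppr_eq0 => /cg.
  move=> l ul cl; rewrite sm_opp; apply: MN; apply: Gg => // q hq; apply: cl.
  by rewrite oppr_eq0.
- move=> g h e _ [[lg cg] Gg]; split.
    by exists lg => q; rewrite -e => /cg.
  move=> l ul cl.
  have -> : sm h l = sm g l by apply: eq_bigr => q _; rewrite e.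
  by apply: Gg => // q; rewrite e => /cl.
Qed.

End Aux.

Local Open Scope classical_set_scope.

Section Main.
Variables (R S : comPzRingType) (f : {rmorphism R -> S}).
Hypothesis f_inj : injective f.
Variable m : R -> Prop.
Hypothesis Hmax : is_maximal_ideal m.

Let M := in_ext_ideal f m.

Definition goodU (U : set S) : Prop :=
  [/\ forall t, M t -> U t, forall x y, U x -> U y -> U (x + y),
      forall r x, U x -> U (f r * x) & forall r, U (f r) -> m r].

Lemma goodN U x : goodU U -> U x -> U (- x).
Proof.
by case=> _ _ Hc _ Ux; have := Hc (-1) x Ux; rewrite rmorphN1 mulN1r.
Qed.

Lemma goodM : ~ M 1 -> goodU M.
Proof.
move=> nM1; split.
- by [].
- by move=> x y; apply: MD.
- by move=> r x; apply: MM.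
- move=> r Mr; case: (pselect (m r)) => // nr; exfalso; apply: nM1.
  have [t ht] := m_inv Hmax nr.
  have := MB (MM (f t) Mr) (Mf f 1 ht).
  by rewrite rmorphB rmorphM rmorph1 mulr1 opprB addrCA subrr addr0.
Qed.

Lemma exists_U : ~ M 1 -> exists U, goodU U /\ forall y, exists r, U (y - f r).
Proof.
move=> nM1.
pose P := fun U : set S => U = set0 \/ goodU U.
have [A [PA maxA]] : exists A, P A /\ forall B, A `<` B -> ~ P B.
  apply: Zorn_bigcup => F FP tot.
  have gX X x : F X -> X x -> goodU X.
    move=> FX Xx; case: (FP X FX) => // X0; by rewrite X0 in Xx.
  case: (pselect (exists X, F X /\ exists x, X x)) => [[X0 [FX0 [x0 X0x0]]]|nE].
    right; have gX0 := gX _ _ FX0 X0x0; split.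
    - move=> t Mt; exists X0 => //; by case: gX0 => + _ _ _; apply.
    - move=> x y [X1 FX1 X1x] [X2 FX2 X2y].
      case: (tot X1 X2 FX1 FX2) => sub.
        exists X2 => //; case: (gX _ _ FX2 X2y) => _ + _ _; apply => //; exact: sub.
      exists X1 => //; case: (gX _ _ FX1 X1x) => _ + _ _; apply => //; exact: sub.
    - move=> r x [X FX Xx]; exists X => //; case: (gX _ _ FX Xx) => _ _ + _; exact.
    - move=> r [X FX Xx]; case: (gX _ _ FX Xx) => _ _ _; exact.
  left; apply/seteqP; split => x // [X FX Xx]; apply: nE; by exists X; split => //; exists x.
have gA : goodU A.
  case: PA => // A0; exfalso; apply: (maxA M); last by right; apply: goodM.
  rewrite A0; split => // /(_ 0 (M0 f m)) //.
exists A; split => // y; apply: contrapT => ny.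
pose B := fun z => exists u s, A u /\ z = u + f s * y.
case: (gA) => Ha Hb Hc Hd.
apply: (maxA B).
  split.
    by move=> z Az; exists z, 0; rewrite rmorph0 mul0r addr0.
  move=> /(_ y) BA.
  have By : B y by exists 0, 1; rewrite rmorph1 mul1r add0r; split => //; apply: Ha; exact: M0.
  by apply: ny; exists 0; rewrite rmorph0 subr0; apply: BA.
right; split.
- by move=> t Mt; exists t, 0; rewrite rmorph0 mul0r addr0; split => //; apply: Ha.
- move=> x z [u1 [s1 [A1 ->]]] [u2 [s2 [A2 ->]]]; exists (u1 + u2), (s1 + s2); split.
    exact: Hb.
  rewrite rmorphD; ring.
- move=> r x [u [s [Au ->]]]; exists (f r * u), (r * s); split; first exact: Hc.
  rewrite rmorphM; ring.
- move=> r [u [s [Au e]]]; case: (pselect (m s)) => ms.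
    apply: Hd; rewrite e; apply: Hb => //; apply: Ha; exact: Mf.
  exfalso; have [t ht] := m_inv Hmax ms; apply: ny; exists (t * r).
  have -> : y - f (t * r) = - (f t * u) + - (f (t * s - 1) * y).
    rewrite rmorphM e rmorphB rmorphM rmorph1; ring.
  apply: Hb; apply: goodN => //; [exact: Hc | apply: Ha; exact: Mf].
Qed.

End Main.

Theorem corollary2p3 (R S : comPzRingType) (f : {rmorphism R -> S})
  (f_inj : injective f) (m : R -> Prop) (Hloc : local_ring_with m) :
  (forall a : S, in_strict_closure f a ->
     exists r : R, exists t : S, in_ext_ideal f m t /\ a = f r + t) /\
  ((forall t : S, in_ext_ideal f m t -> exists r : R, t = f r) ->
     strictly_closed f).
Proof.
have Hmax := Hloc.1.
have part1 : forall a, in_strict_closure f a ->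
    exists r t, in_ext_ideal f m t /\ a = f r + t.
  move=> a Ha.
  case: (pselect (in_ext_ideal f m 1)) => [M1|nM1].
    exists 0, a; split; last by rewrite rmorph0 add0r.
    by have := MM a M1; rewrite mulr1.
  have [U [gU HU]] := exists_U Hmax nM1.
  case: (gU) => Ua Ub Uc Ud.
  pose rr y := projT1 (cid (HU y)).
  have rrP y : U (y - f (rr y)) := projT2 (cid (HU y)).
  have rr_eq y r : U (y - f r) -> m (rr y - r).
    move=> h; apply: Ud.
    have -> : f (rr y - r) = (y - f r) + - (y - f (rr y)) by rewrite rmorphB; ring.
    by apply: Ub; [exact: h | exact: (goodN gU (rrP y))].
  pose psi (q : S * S) := f (rr q.2) * q.1.
  have D1 : forall x x' y, in_ext_ideal f m (psi (x + x', y) - psi (x, y) - psi (x', y)).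
    move=> x x' y; rewrite /psi /=.
    have -> : f (rr y) * (x + x') - f (rr y) * x - f (rr y) * x' = 0 by ring.
    exact: M0.
  have D2 : forall x y y', in_ext_ideal f m (psi (x, y + y') - psi (x, y) - psi (x, y')).
    move=> x y y'; rewrite /psi /=.
    have -> : f (rr (y + y')) * x - f (rr y) * x - f (rr y') * x
        = f (rr (y + y') - (rr y + rr y')) * x by rewrite rmorphB rmorphD; ring.
    apply: Mf; apply: rr_eq.
    have -> : y + y' - f (rr y + rr y') = (y - f (rr y)) + (y' - f (rr y'))
      by rewrite rmorphD; ring.
    exact: Ub.
  have D3 : forall r x y, in_ext_ideal f m (psi (f r * x, y) - psi (x, f r * y)).
    move=> r x y; rewrite /psi /=.
    have -> : f (rr y) * (f r * x) - f (rr (f r * y)) * x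
        = - (f (rr (f r * y) - r * rr y) * x) by rewrite rmorphB rmorphM; ring.
    apply: MN; apply: Mf; apply: rr_eq.
    have -> : f r * y - f (r * rr y) = f r * (y - f (rr y)) by rewrite rmorphM; ring.
    exact: Uc.
  have [[l cl] G] := tensor_good D1 D2 D3 Ha.
  have cl' : covi (fun q => fsing (a, 1) q - fsing (1, a) q) (undup l).
    by move=> q h; rewrite mem_undup; apply: cl.
  have := G (undup l) (undup_uniq l) cl'.
  rewrite (sm2 psi (undup_uniq l) cl') /psi /= => Hd.
  exists (rr a), (f (rr 1) * a - f (rr a) * 1 - f (rr 1 - 1) * a); split.
    apply: MB => //; apply: Mf; apply: rr_eq; rewrite rmorph1 subrr; apply: Ua; exact: M0.
  rewrite rmorphB rmorph1; ring.
split => // Hsub a; split.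
  move=> /part1 [r [t [Mt ->]]]; have [r' ->] := Hsub t Mt.
  by exists (r + r'); rewrite rmorphD.
move=> [r ->]; rewrite /in_strict_closure.
eapply tr_ext; last exact: (tr_bal f r 1 1).
by move=> q /=; rewrite !mulr1.
Qed.
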